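(* Let $\Sigma$ be a finite alphabet, let $\mathbf{w}$ be a right-infinite word over $\Sigma$, and let $L_{\mathbf w}$ be its Lie complexity function and $p_{\mathbf w}$ its factor complexity function. Then for each $n\ge 1$, $$L_{\mathbf w}(n)\le p_{\mathbf w}(n)-p_{\mathbf w}(n-1)+1.$$ In particular, if $\mathbf w$ has linear factor complexity, then $L_{\mathbf w}(n)$ is bounded above by a constant independent of $n$.
   Context: A factor of $\mathbf w$ is a finite block of contiguous symbols of $\mathbf w$ (the empty word included); $\mathrm{Fac}(\mathbf w)$ is the set of factors. The factor complexity $p_{\mathbf w}(n)$ is the number of distinct factors of $\mathbf w$ of length $n$ (so $p_{\mathbf w}(0)=1$). Two words are cyclically equivalent ($v\sim_C v'$) if each is a cyclic shift (conjugate) of the other; $[v]_C$ denotes the class of $v$. The Lie complexity is $L_{\mathbf w}(n)=\#\{[v]_C : |v|=n,\ [v]_C\subseteq \mathrm{Fac}(\mathbf w)\}$, i.e. the number of cyclic classes of length-$n$ words all of whose members are factors of $\mathbf w$. $\mathbf w$ has linear factor complexity if there are constants $A,B$ with $p_{\mathbf w}(n)\le An+B$ for all $n$. *)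

(* Defs.v *)
From mathcomp Require Import all_boot all_algebra.
From mathcomp Require Import boolp.
Set Implicit Arguments. Unset Strict Implicit. Unset Printing Implicit Defensive.

Definition infword (Sigma : finType) := nat -> Sigma.

Definition is_factor (Sigma : finType) (w : infword Sigma) (v : seq Sigma) : Prop :=
  exists i : nat, v = mkseq (fun k => w (i + k)) (size v).

Definition factors_n (Sigma : finType) (w : infword Sigma) (n : nat)
  : {set n.-tuple Sigma} :=
  [set t : n.-tuple Sigma | `[< is_factor w t >] ].

Definition factor_complexity (Sigma : finType) (w : infword Sigma) (n : nat) : nat :=
  #|factors_n w n|.

Definition cyc_class (Sigma : finType) (n : nat) (t : n.-tuple Sigma)
  : {set n.-tuple Sigma} :=
  [set u : n.-tuple Sigma | [exists k : 'I_n.+1, val u == rot k (val t)]].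

Definition lie_complexity (Sigma : finType) (w : infword Sigma) (n : nat) : nat :=
  #|[set cyc_class t | t in [set t : n.-tuple Sigma |
                                  cyc_class t \subset factors_n w n]]|.

Definition linear_factor_complexity (Sigma : finType) (w : infword Sigma) : Prop :=
  exists A B : nat, forall n : nat, factor_complexity w n <= A * n + B.

(* Main.v *)
Require Import Defs.
From mathcomp Require Import all_boot all_algebra.
Import GRing.Theory Num.Theory.
From mathcomp Require Import boolp zify.
Set Implicit Arguments. Unset Strict Implicit. Unset Printing Implicit Defensive.

Section Lie.
Variables (Sigma : finType) (w : infword Sigma).
Let x0 := w 0.

Definition atp (i : nat) (v : seq Sigma) : bool := v == mkseq (fun k => w (i + k)) (size v).

Lemma atpP i v : reflect (forall k, k < size v -> nth x0 v k = w (i + k)) (atp i v).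
Proof.
apply: (iffP eqP) => [hv k hk|h]; first by rewrite hv nth_mkseq // -hv.
apply: (@eq_from_nth _ x0); first by rewrite size_mkseq.
by move=> k hk; rewrite nth_mkseq // h.
Qed.

Lemma factorP v : is_factor w v <-> exists i, atp i v.
Proof. by split=> [[i /eqP]|[i /eqP]]; exists i. Qed.

Lemma memF n (t : n.-tuple Sigma) : (t \in factors_n w n) <-> exists i, atp i t.
Proof. by rewrite inE; split=> [/asboolP/factorP|/factorP/asboolP]. Qed.

Definition occ (v : seq Sigma) : nat :=
  match pselect (exists i, atp i v) with
  | left H => @ex_minn (fun i => atp i v) H
  | right _ => 0 end.

Lemma occP v : (exists i, atp i v) -> atp (occ v) v /\ forall j, atp j v -> occ v <= j.
Proof.
move=> h; rewrite /occ; case: pselect => [H|//].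
by case: ex_minnP => m hm hmin; split.
Qed.

Definition tup n (s : seq Sigma) : n.-tuple Sigma := insubd (nseq_tuple n x0) s.

Lemma val_tup n s : size s = n -> val (tup n s) = s.
Proof. by move=> hs; rewrite val_insubd hs eqxx. Qed.

Definition S (s : seq Sigma) (j : nat) : Sigma := nth x0 s (j %% size s).

Lemma nth_rot k (s : seq Sigma) i : k <= size s -> i < size s ->
  nth x0 (rot k s) i = S s (k + i).
Proof.
move=> hk hi; rewrite /S /rot nth_cat size_drop.
case: ltnP => h1.
  rewrite nth_drop modn_small //; lia.
rewrite nth_take; last by lia.
have -> : (k + i) %% size s = k + i - size s.
  have e : k + i = (k + i - size s) + size s by lia.
  by rewrite {1}e modnDr modn_small; lia.
congr nth; lia.
Qed.

Lemma S_mod s j : S s (j %% size s) = S s j.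
Proof. by rewrite /S modn_mod. Qed.

Lemma S_addn s j : S s (size s + j) = S s j.
Proof. by rewrite /S modnDl. Qed.

Lemma S_addmul s j c : S s (c * size s + j) = S s j.
Proof. by rewrite /S modnMDl. Qed.

Lemma S_nth s j : j < size s -> S s j = nth x0 s j.
Proof. by move=> h; rewrite /S modn_small. Qed.

Lemma memcyc n (t u : n.-tuple Sigma) : 0 < n ->
  (u \in cyc_class t) <-> exists k, forall i, i < n -> nth x0 u i = S t (k + i).
Proof.
move=> n0; rewrite inE; split.
  case/existsP=> k /eqP hu; exists k => i hi.
  rewrite hu nth_rot ?size_tuple //; by have := ltn_ord k; lia.
case=> k hk; apply/existsP.
have hkn : k %% n < n.+1 by have := ltn_pmod k n0; lia.
exists (Ordinal hkn); apply/eqP => /=.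
apply: (@eq_from_nth _ x0); first by rewrite size_rot !size_tuple.
move=> i; rewrite size_tuple => hi.
rewrite hk // nth_rot ?size_tuple. all: try (by have := ltn_pmod k n0; lia). 
by rewrite -S_mod -[RHS]S_mod size_tuple modnDml.
Qed.

Lemma S_tup n (t : n.-tuple Sigma) j : S t j = nth x0 t (j %% n).
Proof. by rewrite /S size_tuple. Qed.

Lemma S_modn n (t : n.-tuple Sigma) j : S t (j %% n) = S t j.
Proof. by rewrite /S size_tuple modn_mod. Qed.

Lemma cyc_refl n (t : n.-tuple Sigma) : 0 < n -> t \in cyc_class t.
Proof. by move=> n0; apply/memcyc => //; exists 0 => i hi; rewrite S_nth ?size_tuple. Qed.

Lemma cyc_trans n (t r u : n.-tuple Sigma) : 0 < n ->
  r \in cyc_class t -> u \in cyc_class r -> u \in cyc_class t.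
Proof.
move=> n0 /(memcyc _ _ n0) [k1 h1] /(memcyc _ _ n0) [k2 h2]; apply/memcyc => //.
exists (k1 + k2) => i hi; rewrite h2 // S_tup h1; last by apply: ltn_pmod.
by rewrite -[LHS]S_mod -[RHS]S_mod size_tuple modnDmr addnA.
Qed.

Lemma cyc_sym n (t r : n.-tuple Sigma) : 0 < n ->
  r \in cyc_class t -> t \in cyc_class r.
Proof.
move=> n0 /(memcyc _ _ n0) [k1 h1]; apply/memcyc => //.
exists (k1 * n - k1) => i hi; rewrite S_tup h1; last by apply: ltn_pmod.
rewrite -[RHS]S_mod size_tuple modnDmr addnA.
have -> : k1 + (k1 * n - k1) = k1 * size t by rewrite size_tuple; nia.
rewrite S_modn.
by rewrite S_addmul S_nth ?size_tuple.
Qed.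

Lemma cyc_eq n (t r : n.-tuple Sigma) : 0 < n ->
  r \in cyc_class t -> cyc_class r = cyc_class t.
Proof.
move=> n0 hr; apply/setP => u; apply/idP/idP => hu.
  exact: cyc_trans hr hu.
exact: cyc_trans (cyc_sym n0 hr) hu.
Qed.


Lemma atp_behead j s : atp j s -> atp j.+1 (behead s).
Proof.
move/atpP=> h; apply/atpP => k; rewrite size_behead nth_behead => hk.
by rewrite h ?addSnnS //; lia.
Qed.

Lemma part1 n : 0 < n ->
  lie_complexity w n + factor_complexity w n.-1 <= factor_complexity w n + 1.
Proof.
move=> n0.
set F := factors_n w n.
set Bad := [set u in F | occ (behead u) == (occ u).+1].
have BadF : Bad \subset F by apply/subsetP => u; rewrite inE => /andP[].
have stepA : factor_complexity w n.-1 <= #|Bad| + 1.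
  set F1 := factors_n w n.-1.
  set y0 := tup n.-1 (mkseq (fun k => w (0 + k)) n.-1).
  have sub : F1 :\ y0 \subset [set behead_tuple u | u in Bad].
    apply/subsetP => x; rewrite in_setD1 => /andP[xne xF].
    have [hat hmin] := occP (proj1 (memF x) xF).
    set o := occ x in hat hmin.
    have o0 : o != 0.
      apply/eqP=> o0; move/eqP: xne; apply; apply: val_inj.
      rewrite val_tup ?size_mkseq //; apply/eqP; move: hat; rewrite o0.
      by rewrite /atp size_tuple.
    set u := tup n (mkseq (fun k => w (o.-1 + k)) n).
    have vu : val u = mkseq (fun k => w (o.-1 + k)) n by rewrite val_tup ?size_mkseq.
    have atu : atp o.-1 u by rewrite /atp vu size_mkseq.
    have bx : behead u = x.
      apply: (@eq_from_nth _ x0); first by rewrite size_behead vu size_mkseq size_tuple.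
      move=> k; rewrite size_behead vu size_mkseq => hk.
      rewrite nth_behead nth_mkseq; last by lia.
      move/atpP: hat => ->; last by rewrite size_tuple.
      congr w; lia.
    apply/imsetP; exists u; last by apply: val_inj; rewrite /= bx.
    rewrite inE; apply/andP; split; first by apply/memF; exists o.-1.
    have [hatu hminu] := occP (ex_intro (fun i => atp i u) _ atu).
    have h1 := hminu _ atu.
    have := atp_behead hatu; rewrite bx => /hmin h2.
     apply/eqP; lia.
  have h1 := subset_leq_card sub.
  have h2 := leq_imset_card (@behead_tuple n Sigma) Bad.
  have h3 := cardsD1 y0 F1.
  have h4 := leq_b1 (y0 \in F1).
  rewrite /factor_complexity -/F1. rewrite h3 addnC; exact: leq_add (leq_trans h1 h2) h4.
have stepB : lie_complexity w n <= #|F :\: Bad|.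
  rewrite /lie_complexity; apply: (leq_trans _ (leq_imset_card (@cyc_class Sigma n) (F :\: Bad))).
  apply: subset_leq_card; apply/subsetP => C /imsetP [t]; rewrite inE => tG ->.
  case: (arg_minnP (fun v : n.-tuple Sigma => occ v) (cyc_refl t n0)) => u hu hmin.
  set r := tup n (mkseq (fun i => S u (n.-1 + i)) n).
  have vr : val r = mkseq (fun i => S u (n.-1 + i)) n by rewrite val_tup ?size_mkseq.
  have ru : r \in cyc_class u.
    by apply/memcyc => //; exists n.-1 => i hi; rewrite vr nth_mkseq.
  have rt : r \in cyc_class t by exact: cyc_trans hu ru.
  apply/imsetP; exists r; last by rewrite (cyc_eq n0 rt).
  have rF : r \in F by move/subsetP: tG; apply.
  have uF : u \in F by move/subsetP: tG; apply.
  have [hatu _] := occP (proj1 (memF u) uF).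
  have hb : atp (occ u) (behead r).
    apply/atpP => k; rewrite size_behead size_tuple => hk.
    rewrite nth_behead vr nth_mkseq; last by lia.
    have -> : n.-1 + k.+1 = size u + k by rewrite size_tuple; lia.
    rewrite S_addn S_nth ?size_tuple; last by lia.
    by move/atpP: hatu => ->; rewrite // size_tuple; lia.
  have [_ hminb] := occP (ex_intro (fun i => atp i (behead r)) _ hb).
  have h1 := hminb _ hb.
  have h2 := hmin _ rt.
  rewrite in_setD rF andbT inE rF /=; apply/eqP; lia.
have h5 : #|F :\: Bad| = #|F| - #|Bad| by rewrite cardsD (setIidPr BadF).
have h6 := subset_leq_card BadF.
rewrite /factor_complexity -/F in stepA *; lia.
Qed.


Definition RS m : {set m.-tuple Sigma} :=
  [set x : m.-tuple Sigma | [exists a : Sigma, exists b : Sigma, [&& a != b, `[< is_factor w (rcons x a) >] &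
                                         `[< is_factor w (rcons x b) >]]]].

Definition ext1 m (x : m.-tuple Sigma) : m.+1.-tuple Sigma :=
  tup m.+1 (mkseq (fun k => w (occ x + k)) m.+1).

Definition alt m (x : m.-tuple Sigma) : m.+1.-tuple Sigma :=
  tup m.+1 (rcons x (odflt x0 [pick a | `[< is_factor w (rcons x a) >] &&
                                      (a != nth x0 (ext1 x) m)])).

Lemma take_ext1 m (x : m.-tuple Sigma) : x \in factors_n w m -> take m (ext1 x) = x.
Proof.
move=> xF; have [hat _] := occP (proj1 (memF x) xF).
rewrite val_tup ?size_mkseq //.
apply: (@eq_from_nth _ x0); first by rewrite size_take size_mkseq size_tuple ltnSn.
move=> k; rewrite size_take size_mkseq ltnSn => hk.
rewrite nth_take // nth_mkseq; last by lia.
by move/atpP: hat => ->; rewrite // size_tuple.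
Qed.

Lemma take_alt m (x : m.-tuple Sigma) : take m (alt x) = x.
Proof.
by rewrite val_tup ?size_rcons ?size_tuple // -cats1 -{1}(size_tuple x) take_size_cat.
Qed.

Lemma RS_bound m : factor_complexity w m + #|RS m| <= factor_complexity w m.+1.
Proof.
set F := factors_n w m.
set E1 := [set ext1 x | x in F].
set E2 := [set alt x | x in RS m].
have c1 : #|E1| = #|F|.
  apply: card_in_imset => x y xF yF e.
  by apply: val_inj; have := congr1 (fun z : m.+1.-tuple Sigma => take m (val z)) e; rewrite /= !take_ext1.
have c2 : #|E2| = #|RS m|.
  apply: card_in_imset => x y _ _ e.
  by apply: val_inj; have := congr1 (fun z : m.+1.-tuple Sigma => take m (val z)) e; rewrite /= !take_alt.
have dis : [disjoint E1 & E2].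
  rewrite -setI_eq0; apply/eqP/setP => z; rewrite !inE.
  apply/negP => /andP[/imsetP[x xF ->] /imsetP[y yR e]].
  have xy : x = y by apply: val_inj; have := congr1 (fun z : m.+1.-tuple Sigma => take m (val z)) e; rewrite /= take_alt take_ext1.
  subst y; move: e; rewrite /alt.
  case: pickP => [a /andP[_ ha] e|].
    move: ha; rewrite e val_tup; last by rewrite size_rcons size_tuple.
    by rewrite nth_rcons size_tuple ltnn eqxx eqxx.
  move: yR; rewrite inE => /existsP[a /existsP[b /and3P[ab ha hb]]] hnone _.
  move: ab; have := hnone a; have := hnone b; rewrite ha hb /= => /negbFE/eqP -> /negbFE/eqP ->.
  by rewrite eqxx.
have sub : E1 :|: E2 \subset factors_n w m.+1.
  apply/subsetP => z; rewrite inE => /orP[/imsetP[x xF ->]|/imsetP[x xR ->]]; apply/memF.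
    have [hat _] := occP (proj1 (memF x) xF).
    by exists (occ x); rewrite /atp val_tup ?size_mkseq.
  rewrite /alt; case: pickP => [a /andP[ha _]|].
    by move/asboolP/factorP: ha => [i hi]; exists i; rewrite val_tup // size_rcons size_tuple.
  move: xR; rewrite inE => /existsP[a /existsP[b /and3P[ab ha hb]]] hnone.
  move: ab; have := hnone a; have := hnone b; rewrite ha hb /= => /negbFE/eqP -> /negbFE/eqP ->.
  by rewrite eqxx.
have := subset_leq_card sub; rewrite cardsU (disjoint_setI0 dis) cards0 subn0 c1 c2.
by [].
Qed.


Lemma S_congr n (t : n.-tuple Sigma) x y : x %% n = y %% n -> S t x = S t y.
Proof. by move=> e; rewrite -S_modn e S_modn. Qed.

Definition perb n (t : n.-tuple Sigma) k := (0 < k) && [forall i : 'I_n, S t (i + k) == S t i].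

Lemma perbP n (t : n.-tuple Sigma) k : 0 < n ->
  perb t k <-> 0 < k /\ forall j, S t (j + k) = S t j.
Proof.
move=> n0; split.
  case/andP=> k0 /forallP h; split=> // j.
  have hj : j %% n < n by apply: ltn_pmod.
  have := eqP (h (Ordinal hj)); rewrite /= => e.
  rewrite -(S_congr t (x := (j %% n) + k)); last by rewrite modnDml.
  by rewrite e S_modn.
case=> k0 h; apply/andP; split=> //; apply/forallP => i; by rewrite h.
Qed.

Definition per n (t : n.-tuple Sigma) : nat :=
  match pselect (exists k, perb t k) with
  | left H => @ex_minn (fun k => perb t k) H
  | right _ => 0 end.

Lemma perP n (t : n.-tuple Sigma) : 0 < n ->
  perb t (per t) /\ forall k, perb t k -> per t <= k.
Proof.
move=> n0; rewrite /per; case: pselect => [H|H].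
  by case: ex_minnP => m hm hmin; split.
exfalso; apply: H; exists n; apply/perbP => //; split=> // j.
by apply: S_congr; rewrite modnDr.
Qed.

Lemma S_per_congr n (t : n.-tuple Sigma) d x y : 0 < d ->
  (forall j, S t (j + d) = S t j) -> x %% d = y %% d -> S t x = S t y.
Proof.
move=> d0 hd e.
have hm : forall c j, S t (j + c * d) = S t j.
  elim=> [|c IH] j; first by rewrite mul0n addn0.
  by rewrite mulSn addnCA addnC hd IH.
by rewrite (divn_eq x d) (divn_eq y d) ![_ * d + _]addnC !hm e.
Qed.

Lemma per_le_card n (t : n.-tuple Sigma) : 0 < n -> per t <= #|cyc_class t|.
Proof.
move=> n0; have [hp hmin] := perP t n0.
set d := per t.
pose rk (k : 'I_d) := tup n (mkseq (fun i => S t (k + i)) n).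
have rkv k : val (rk k) = mkseq (fun i => S t (k + i)) n by rewrite val_tup ?size_mkseq.
have inj : injective rk.
  have key : forall k1 k2 : 'I_d, k1 < k2 -> rk k1 = rk k2 -> False.
    move=> k1 k2 lt e.
    have e2 : forall i, i < n -> S t (k1 + i) = S t (k2 + i).
      move=> i hi; have := congr1 (fun z : n.-tuple Sigma => nth x0 z i) e.
      by rewrite /= !rkv !nth_mkseq.
    have : perb t (k2 - k1).
      apply/perbP => //; split; first by lia.
      move=> j; set i := (j + n * k1 - k1) %% n.
      have hi : i < n by apply: ltn_pmod.
      have c1 : (k1 + i) %% n = j %% n.
        rewrite /i modnDmr; have -> : k1 + (j + n * k1 - k1) = j + k1 * n by nia.
        by rewrite addnC modnMDl.
      have c2 : (j + (k2 - k1)) %% n = (k2 + i) %% n.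
        have -> : k2 + i = (k2 - k1) + (k1 + i) by lia.
        by rewrite -[RHS]modnDmr c1 modnDmr addnC.
      by rewrite (S_congr t c2) -e2 // (S_congr t c1).
    move/hmin; have := ltn_ord k2; lia.
  move=> k1 k2 e; case: (ltngtP k1 k2) => h.
  - by exfalso; exact: key h e.
  - by exfalso; exact: key h (esym e).
  - exact: val_inj.
have sub : [set rk k | k in 'I_d] \subset cyc_class t.
  apply/subsetP => u /imsetP [k _ ->]; apply/memcyc => //; exists k => i hi.
  by rewrite rkv nth_mkseq.
by have := subset_leq_card sub; rewrite card_imset // card_ord.
Qed.


Definition jmis n (t : n.-tuple Sigma) : option nat :=
  match pselect (exists j, w (occ t + j) != S t j) with
  | left H => Some (@ex_minn (fun j => w (occ t + j) != S t j) H)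
  | right _ => None end.

Lemma jmis_none n (t : n.-tuple Sigma) : jmis t = None -> forall j, w (occ t + j) = S t j.
Proof.
rewrite /jmis; case: pselect => [//|H] _ j.
by case: (w (occ t + j) =P S t j) => // /eqP h; exfalso; apply: H; exists j.
Qed.

Lemma jmis_some n (t : n.-tuple Sigma) j0 : jmis t = Some j0 ->
  w (occ t + j0) != S t j0 /\ forall j, j < j0 -> w (occ t + j) = S t j.
Proof.
rewrite /jmis; case: pselect => [H [<-]|//].
case: ex_minnP => m hm hmin; split=> // j hj.
by case: (w (occ t + j) =P S t j) => // /eqP h; have := hmin _ h; lia.
Qed.

Lemma jmis_ge n (t : n.-tuple Sigma) j0 : t \in factors_n w n -> jmis t = Some j0 -> n <= j0.
Proof.
move=> tF /jmis_some [h _]; have [hat _] := occP (proj1 (memF t) tF).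
rewrite leqNgt; apply/negP => hj; move: h; move/atpP: hat => <-; last by rewrite size_tuple.
by rewrite S_nth ?size_tuple // eqxx.
Qed.

Definition fw m n (t : n.-tuple Sigma) : m.-tuple Sigma :=
  tup m (mkseq (fun i => S t (odflt 0 (jmis t) - m + i)) m).

Lemma fw_RS m n (t : n.-tuple Sigma) j0 : 0 < n -> m < n ->
  cyc_class t \subset factors_n w n -> jmis t = Some j0 -> fw m t \in RS m.
Proof.
move=> n0 mn tG hj.
have tF : t \in factors_n w n by move/subsetP: tG; apply; apply: cyc_refl.
have jn := jmis_ge tF hj.
have [hneq hbef] := jmis_some hj.
have vf : val (fw m t) = mkseq (fun i => S t (j0 - m + i)) m.
  by rewrite val_tup ?size_mkseq // hj.
rewrite inE; apply/existsP; exists (w (occ t + j0)); apply/existsP; exists (S t j0).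
rewrite hneq /=; apply/andP; split; apply/asboolP/factorP.
  exists (occ t + (j0 - m)); apply/atpP => k; rewrite size_rcons size_tuple => hk.
  rewrite nth_rcons vf size_mkseq; case: ltnP => hkm.
    rewrite nth_mkseq // -hbef; first by congr w; lia.
    lia.
  have -> : k = m by lia.
  by rewrite eqxx; congr w; lia.
set r := tup n (mkseq (fun i => S t (j0 - m + i)) n).
have vr : val r = mkseq (fun i => S t (j0 - m + i)) n by rewrite val_tup ?size_mkseq.
have rt : r \in cyc_class t.
  by apply/memcyc => //; exists (j0 - m) => i hi; rewrite vr nth_mkseq.
have rF : r \in factors_n w n by move/subsetP: tG; apply.
have [q hq] := proj1 (memF r) rF.
exists q; apply/atpP => k; rewrite size_rcons size_tuple => hk.
move/atpP: hq => <-; last by rewrite size_tuple; lia.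
rewrite nth_rcons vf size_mkseq vr [in RHS]nth_mkseq; last by lia.
case: ltnP => hkm; first by rewrite nth_mkseq.
have -> : k = m by lia.
by rewrite eqxx; congr S; lia.
Qed.


Lemma transfer n (t t' : n.-tuple Sigma) d d' a a' m : 0 < d -> 0 < d' ->
  (forall j, S t (j + d) = S t j) -> (forall j, S t' (j + d') = S t' j) ->
  (forall i, i < m -> S t (a + i) = S t' (a' + i)) -> d + d' <= m ->
  forall j, S t (j + d') = S t j.
Proof.
move=> d0 d'0 hd hd' agr hm j.
set i := (j + a * d - a) %% d.
have hi : i < d by apply: ltn_pmod.
have c : (a + i) %% d = j %% d.
  rewrite /i modnDmr; have -> : a + (j + a * d - a) = j + a * d by have := leq_pmulr a d0; lia.
  by rewrite addnC modnMDl.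
have c2 : (a + (i + d')) %% d = (j + d') %% d.
  by rewrite addnA -modnDml c modnDml.
rewrite -(S_per_congr d0 hd c2) -(S_per_congr d0 hd c) agr; last by lia.
by rewrite agr; [rewrite addnA hd' | lia].
Qed.

Lemma fw_agree m n (t : n.-tuple Sigma) j0 i : jmis t = Some j0 -> i < m ->
  nth x0 (fw m t) i = S t (j0 - m + i).
Proof. by move=> hj hi; rewrite val_tup ?size_mkseq // hj nth_mkseq. Qed.

Lemma fw_inj m n (t t' : n.-tuple Sigma) j0 j0' : 0 < n ->
  jmis t = Some j0 -> jmis t' = Some j0' -> fw m t = fw m t' ->
  per t + per t' <= m -> cyc_class t = cyc_class t'.
Proof.
move=> n0 hj hj' e hm.
have [/(perbP _ _ n0) [d0 hd] hmin] := perP t n0.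
have [/(perbP _ _ n0) [d'0 hd'] hmin'] := perP t' n0.
set d := per t in d0 hd hmin hm; set d' := per t' in d'0 hd' hmin' hm.
set a := j0 - m; set a' := j0' - m.
have agr : forall i, i < m -> S t (a + i) = S t' (a' + i).
  by move=> i hi; rewrite -(fw_agree hj hi) -(fw_agree hj' hi) e.
have agr' : forall i, i < m -> S t' (a' + i) = S t (a + i) by move=> i hi; rewrite agr.
have p1 := transfer d0 d'0 hd hd' agr hm.
have p2 : forall j, S t' (j + d) = S t' j.
  by apply: (transfer d'0 d0 hd' hd agr'); rewrite addnC.
have e1 : d <= d' by apply: hmin; apply/perbP.
have e2 : d' <= d by apply: hmin'; apply/perbP.
have dd : d' = d by apply/eqP; rewrite eqn_leq e1 e2.
rewrite dd in hd' p2.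
suff h : t' \in cyc_class t by rewrite (cyc_eq n0 h).
apply/memcyc => //; exists (a + a' * d - a') => i hi.
set i2 := (i + a' * d - a') %% d.
have hi2 : i2 < d by apply: ltn_pmod.
have c1 : (a' + i2) %% d = i %% d.
  rewrite /i2 modnDmr; have -> : a' + (i + a' * d - a') = i + a' * d by have := leq_pmulr a' d0; lia.
  by rewrite addnC modnMDl.
have c2 : (a + i2) %% d = (a + a' * d - a' + i) %% d.
  rewrite /i2 modnDmr; congr (_ %% _); have := leq_pmulr a' d0; lia.
rewrite -S_nth ?size_tuple // -(S_per_congr d0 hd' c1) -agr; last by lia.
exact: S_per_congr d0 hd c2.
Qed.

Lemma ev_same n (t t' : n.-tuple Sigma) : 0 < n ->
  jmis t = None -> jmis t' = None -> cyc_class t = cyc_class t'.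
Proof.
move=> n0 /jmis_none h /jmis_none h'.
set u := tup n (mkseq (fun i => w (occ t + occ t' + i)) n).
have vu : val u = mkseq (fun i => w (occ t + occ t' + i)) n by rewrite val_tup ?size_mkseq.
have u1 : u \in cyc_class t.
  by apply/memcyc => //; exists (occ t'); move=> i hi; rewrite vu nth_mkseq // -addnA h.
have u2 : u \in cyc_class t'.
  apply/memcyc => //; exists (occ t); move=> i hi; rewrite vu nth_mkseq //.
  by rewrite [occ t + _]addnC -addnA h'.
by rewrite -(cyc_eq n0 u1) (cyc_eq n0 u2).
Qed.

End Lie.

Lemma card_imset_le (aT rT1 rT2 : finType) (f : aT -> rT1) (g : aT -> rT2) (A : {set aT}) :
  {in A &, forall x y, f x = f y -> g x = g y} -> #|g @: A| <= #|f @: A|.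
Proof.
move=> h; case: (set_0Vmem A) => [->|[a aA]]; first by rewrite !imset0 cards0.
pose k y := if [pick x in A | f x == y] is Some x then g x else g a.
apply: (leq_trans _ (leq_imset_card k _)); apply: subset_leq_card.
apply/subsetP => z /imsetP [x xA ->]; apply/imsetP; exists (f x); first by apply/imsetP; exists x.
rewrite /k; case: pickP => [x' /andP[x'A /eqP e]|hn]; first by apply: h.
by have := hn x; rewrite xA eqxx.
Qed.

Lemma averaging (p r : nat -> nat) A B n : 0 < n ->
  (forall m, p m + r m <= p m.+1) -> p n <= A * n + B ->
  exists m, n <= (2 * m).+1 /\ m < n /\ r m <= 2 * A + B.
Proof.
move=> n0 hpr hpn.
case: (boolP [exists m : 'I_n, (n <= (2 * m).+1) && (r m <= 2 * A + B)]).
  by case/existsP=> m /andP[h1 h2]; exists m; split=> //; split=> //; apply: ltn_ord.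
move=> hno.
have H : forall m, n <= (2 * m).+1 -> m < n -> 2 * A + B < r m.
  move=> m h1 h2; rewrite ltnNge; apply/negP => h3; move/negP: hno; apply.
  by apply/existsP; exists (Ordinal h2); rewrite h1 h3.
set h := n./2.
have hh := odd_double_half n; rewrite -muln2 -/h in hh.
have cl : forall j, h + j <= n -> p h + j * (2 * A + B).+1 <= p (h + j).
  elim=> [|j IH] hj; first by rewrite mul0n addn0 addn0.
  have := IH ltac:(lia); have := hpr (h + j); have := H (h + j).
  rewrite addnS mulSn; move=> H1 H2 H3.
  have : 2 * A + B < r (h + j) by apply: H1; [case: (odd n) hh; lia | lia].
  lia.
have := cl (n - h); rewrite subnKC; last by case: (odd n) hh; lia.
set k := n - h => hk.
have k1 : 0 < k by rewrite /k; case: (odd n) hh; lia.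
have k2 : n <= 2 * k by rewrite /k; case: (odd n) hh; lia.
have f1 : A * n <= A * (2 * k) by apply: leq_mul.
have f2 : B <= B * k by apply: leq_pmulr.
exfalso; move: f1 f2 hk hpn; rewrite ?mulnDr ?mulnDl ?mulnS; lia.
Qed.


Section Lie2.
Variables (Sigma : finType) (w : infword Sigma).

Lemma large_bound n (G : {set n.-tuple Sigma}) : 0 < n ->
  {in G, forall t, cyc_class t \subset factors_n w n} ->
  {in G, forall t, n < 4 * per w t} ->
  #|[set cyc_class t | t in G]| * n.+1 <= 4 * factor_complexity w n.
Proof.
move=> n0 hG hL; set P := [set cyc_class t | t in G].
have tr : trivIset P.
  apply/trivIsetP => C1 C2 /imsetP[t1 t1G ->] /imsetP[t2 t2G ->] ne.
  rewrite -setI_eq0; apply/eqP/setP => u; rewrite in_setI in_set0.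
  apply/negP => /andP[u1 u2]; move/negP: ne; apply; apply/eqP.
  by rewrite -(cyc_eq w n0 u1) (cyc_eq w n0 u2).
have sc : \sum_(C in P) #|C| = #|cover P| by apply/eqP.
have cov : cover P \subset factors_n w n.
  by apply/bigcupsP => C /imsetP[t tG ->]; exact: hG.
have low : \sum_(C in P) n.+1 <= \sum_(C in P) 4 * #|C|.
  apply: leq_sum => C /imsetP[t tG ->].
  have := hL t tG; have := per_le_card w t n0; lia.
rewrite sum_nat_const -big_distrr /= in low.
have := subset_leq_card cov; rewrite /factor_complexity. move=> h; apply: (leq_trans low); by rewrite leq_mul2l sc h orbT.
Qed.

Lemma part2 A B : (forall n, factor_complexity w n <= A * n + B) ->
  forall n, lie_complexity w n <= 6 * A + 5 * B + 1.
Proof.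
move=> hAB n; case: n => [|n].
  rewrite /lie_complexity; apply: leq_trans (leq_imset_card _ _) _.
  apply: leq_trans (max_card _) _; rewrite card_tuple expn0; lia.
set N := n.+1; have n0 : 0 < N by [].
have [m [hm1 [hm2 hm3]]] := averaging n0 (RS_bound w) (hAB N).
set G := [set t : N.-tuple Sigma | cyc_class t \subset factors_n w N].
set Lg := [set t in G | N < 4 * per w t].
set SE := [set t in G | (4 * per w t <= N) && (jmis w t == None)].
set SN := [set t in G | (4 * per w t <= N) && (jmis w t != None)].
have cov : G \subset Lg :|: SE :|: SN.
  apply/subsetP => t tG; rewrite !inE; rewrite inE in tG; rewrite tG /=.
  by case: (ltnP N (4 * per w t)) => //= _; case: (jmis w t == None).
have hGt : forall t, t \in G -> cyc_class t \subset factors_n w N by move=> t; rewrite inE.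
have step : lie_complexity w N <=
    #|(@cyc_class Sigma N) @: Lg| + #|(@cyc_class Sigma N) @: SE| + #|(@cyc_class Sigma N) @: SN|.
  rewrite /lie_complexity -/G.
  apply: leq_trans (subset_leq_card (imsetS (@cyc_class Sigma N) cov)) _.
  rewrite !imsetU.
  apply: leq_trans (leq_card_setU _ _).1 _; rewrite leq_add2r.
  exact: (leq_card_setU _ _).1.
have bL : #|(@cyc_class Sigma N) @: Lg| <= 4 * A + 4 * B.
  have := large_bound n0 (G := Lg).
  have h1 : {in Lg, forall t, cyc_class t \subset factors_n w N}.
    by move=> t; rewrite inE => /andP[/hGt].
  have h2 : {in Lg, forall t, N < 4 * per w t} by move=> t; rewrite inE => /andP[].
  move=> /(_ h1 h2) h3; have h4 := hAB N.
  rewrite -(leq_pmul2r (ltn0Sn N)); apply: leq_trans h3 _.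
  rewrite mulnDl !mulnS; lia.
have bE : #|(@cyc_class Sigma N) @: SE| <= 1.
  case: (set_0Vmem SE) => [->|[t0 t0E]]; first by rewrite imset0 cards0.
  rewrite -(cards1 (cyc_class t0)); apply: subset_leq_card.
  apply/subsetP => C /imsetP[t tE ->]; rewrite inE; apply/eqP.
  move: tE t0E; rewrite !inE => /andP[_ /andP[_ /eqP e1]] /andP[_ /andP[_ /eqP e2]].
  exact: ev_same n0 e1 e2.
have bN : #|(@cyc_class Sigma N) @: SN| <= 2 * A + B.
  have hc : #|(@cyc_class Sigma N) @: SN| <= #|[set fw w m t | t in SN]|.
    apply: card_imset_le => t t'; rewrite !inE => /andP[_ /andP[p1 j1]] /andP[_ /andP[p2 j2]] e.
    case hj: (jmis w t) j1 => [j0|] // _; case hj': (jmis w t') j2 => [j0'|] // _.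
    apply: fw_inj n0 hj hj' e _; lia.
  have hs : [set fw w m t | t in SN] \subset RS w m.
    apply/subsetP => x /imsetP[t tSN ->]; rewrite !inE in tSN.
    case/andP: tSN => tG /andP[_ j1].
    case hj: (jmis w t) j1 => [j0|] // _.
    by apply: fw_RS n0 _ tG hj; lia.
  exact: leq_trans hc (leq_trans (subset_leq_card hs) hm3).
lia.
Qed.

End Lie2.

Local Open Scope ring_scope.

Theorem theorem1 (Sigma : finType) (w : infword Sigma) :
  (forall n : nat, (1 <= n)%N ->
     ((lie_complexity w n)%:Z <=
        (factor_complexity w n)%:Z - (factor_complexity w n.-1)%:Z + 1)) /\
  (linear_factor_complexity w ->
     exists C : nat, forall n : nat, (lie_complexity w n <= C)%N).
Proof.
split.
  move=> n hn; have := part1 w hn; lia.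
case=> A [B hAB]; exists (6 * A + 5 * B + 1)%N; exact: part2 hAB.
Qed.
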